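(* Let $\mathbb{Q}[[Z]]$ and $\mathbb{Q}[[X,Y]]$ be the formal power series rings, each equipped with the topology given by the filtration by total degree ($F_p^Z$, resp. $F_p^{X,Y}$, being the set of series having only terms of total degree $\ge p$). Set $z:=e^Z=\sum_{i\ge0}Z^i/i!\in\mathbb{Q}[[Z]]$, so that the Laurent polynomial ring $\mathbb{Q}[z,z^{-1}]$ is a subring of $\mathbb{Q}[[Z]]$. Define a $\mathbb{Q}$-linear map $\hat\mu\colon\mathbb{Q}[z,z^{-1}]\to\mathbb{Q}[[X,Y]]$ by $$\hat{\mu}(z^k)=\begin{cases}-\sum_{i=1}^k e^{iX}e^{(k-i)Y} & (k>0),\\ 0 & (k=0),\\ \sum_{i=0}^{|k|-1}e^{-iX}e^{(k+i)Y} & (k<0).\end{cases}$$ Then there exists a unique continuous map $\hat\mu\colon\mathbb{Q}[[Z]]\to\mathbb{Q}[[X,Y]]$ extending this map.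
   Context: Here $e^{W}$ denotes the formal exponential series $\sum_{i\ge0}W^i/i!$. The subspace topology on $\mathbb{Q}[z,z^{-1}]$ induced from $\mathbb{Q}[[Z]]$ coincides with the $I$-adic topology, where $I$ is the augmentation ideal (kernel of $\sum_j a_jz^j\mapsto\sum_j a_j$). *)

(* Defs.v *)
(* Formal power series over Q represented by coefficient
   functions: Q[[Z]] ~ nat -> rat,  Q[[X,Y]] ~ nat -> nat -> rat. *)
From mathcomp Require Import all_boot all_order all_algebra.
Set Implicit Arguments. Unset Strict Implicit. Unset Printing Implicit Defensive.
Import Order.TTheory GRing.Theory Num.Theory.
Local Open Scope ring_scope.

Definition serZ := nat -> rat.
Definition serXY := nat -> nat -> rat.

Definition inFZ (p : nat) (f : serZ) : Prop := forall n, (n < p)%N -> f n = 0.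
Definition inFXY (p : nat) (g : serXY) : Prop :=
  forall a b, (a + b < p)%N -> g a b = 0.

Definition subZ (f g : serZ) : serZ := fun n => f n - g n.
Definition subXY (f g : serXY) : serXY := fun a b => f a b - g a b.

(* Continuity for the (translation-invariant) filtration topologies, whose
   neighbourhood bases at a point x are the cosets x + F_p. *)
Definition filt_continuous (F : serZ -> serXY) : Prop :=
  forall (a : serZ) (q : nat), exists p : nat,
    forall b : serZ, inFZ p (subZ b a) -> inFXY q (subXY (F b) (F a)).

(* e^{kZ} = z^k in Q[[Z]] *)
Definition expZ (k : int) : serZ := fun n => (k%:~R : rat) ^+ n / (n`!)%:R.

Definition expXY (i j : int) : serXY :=
  fun a b => ((i%:~R : rat) ^+ a / (a`!)%:R) * ((j%:~R : rat) ^+ b / (b`!)%:R).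

Definition mu_mono (k : int) : serXY :=
  fun a b =>
    if (0 < k) then - \sum_(1 <= i < `|k|%N.+1) expXY i%:Z (k - i%:Z) a b
    else if k == 0 then 0
    else \sum_(0 <= i < `|k|%N) expXY (- i%:Z) (k + i%:Z) a b.

(* A Laurent polynomial \sum c_k z^k of Q[z,z^{-1}] is given by a finite
   list of pairs (k, c_k). *)
Definition laurent := seq (int * rat).

Definition laurent_series (s : laurent) : serZ :=
  fun n => \sum_(x <- s) x.2 * expZ x.1 n.

Definition mu_laurent (s : laurent) : serXY :=
  fun a b => \sum_(x <- s) x.2 * mu_mono x.1 a b.

(* Main.v *)
Require Import Defs.
From mathcomp Require Import all_boot all_order all_algebra.
From Stdlib Require Import IndefiniteDescription FunctionalExtensionality.
From mathcomp Require Import ring.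
Set Implicit Arguments. Unset Strict Implicit. Unset Printing Implicit Defensive.
Import Order.TTheory GRing.Theory Num.Theory.
Local Open Scope ring_scope.

Definition AD (h : rat -> rat) :=
  exists S : {poly rat}, forall x, S.[x] - S.[x - 1] = h x.

Lemma AD_sum (n : nat) (F : nat -> rat -> rat) :
  (forall i, (i < n)%N -> AD (F i)) -> AD (fun x => \sum_(i < n) F i x).
Proof.
elim: n => [|n IH] H.
  by exists 0 => x; rewrite big_ord0 !horner0 subrr.
have [S1 HS1] := IH (fun i lt => H i (ltnW lt)).
have [S2 HS2] := H n (ltnSn n).
exists (S1 + S2) => x; rewrite big_ord_recr /= !hornerD -HS1 -HS2.
by rewrite addrACA opprD.
Qed.

Lemma AD_scale c h : AD h -> AD (fun x => c * h x).
Proof.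
by move=> [S HS]; exists (c *: S) => x; rewrite !hornerZ -mulrBr HS.
Qed.

Lemma AD_ext h g : AD h -> (forall x, h x = g x) -> AD g.
Proof. by move=> [S HS] E; exists S => x; rewrite HS E. Qed.

Lemma AD_X m : AD (fun x => x ^+ m).
Proof.
elim/ltn_ind: m => m IH.
pose R (x : rat) := \sum_(i < m) (x ^+ (m - i.+1) * (-1) ^+ i.+2) *+ 'C(m.+1, i.+2).
have HR : AD R.
  apply: (@AD_sum m (fun i x => (x ^+ (m - i.+1) * (-1) ^+ i.+2) *+ 'C(m.+1, i.+2))) => i lti.
  have lt : (m - i.+1 < m)%N by rewrite ltn_subrL /=; exact: leq_ltn_trans (leq0n i) lti.
  eapply AD_ext; first exact: (AD_scale ((-1) ^+ i.+2 *+ 'C(m.+1, i.+2)) (IH _ lt)).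
  by move=> x; rewrite -mulrnAr mulrC.
have [S1 HS1] := HR.
have mn : (m.+1)%:R != 0 :> rat by rewrite pnatr_eq0.
exists ((m.+1)%:R^-1 *: ('X^(m.+1) + S1)) => x.
rewrite !hornerZ -mulrBr !hornerD !hornerXn opprD addrACA HS1.
rewrite /R (exprDn x (-1) m.+1) !big_ord_recl /= /bump /= !add1n subn0 subSS bin0 bin1.
rewrite (eq_bigr (fun i : 'I_m => x ^+ (m - i.+1) * (-1) ^+ i.+2 *+ 'C(m.+1, i.+2))); last first.
  by move=> i _; rewrite subSS.
set s := \sum_(i < m) _.
rewrite expr0 expr1 mulr1 mulr1n mulrN1 subn0 -mulr_natr.
field.
by rewrite addrC natr1.
Qed.

Definition Sm m : {poly rat} := proj1_sig (constructive_indefinite_description _ (AD_X m)).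
Lemma SmP m x : (Sm m).[x] - (Sm m).[x - 1] = x ^+ m.
Proof. by rewrite /Sm; case: constructive_indefinite_description. Qed.

Definition ssum (h : rat -> rat) (k : int) : rat :=
  if (0 <= k) then \sum_(1 <= i < `|k|%N.+1) h i%:R else - \sum_(0 <= i < `|k|%N) h (- i%:R).

Section Ssum.
Variables (h : rat -> rat) (S : {poly rat}).
Hypothesis HS : forall x, S.[x] - S.[x - 1] = h x.

Lemma ssum_pos n : \sum_(1 <= i < n.+1) h i%:R = S.[n%:R] - S.[0].
Proof.
elim: n => [|n IH]; first by rewrite big_geq // subrr.
by rewrite big_nat_recr //= IH -HS -natr1 addrK addrC addrA subrK.
Qed.

Lemma ssum_neg n : \sum_(0 <= i < n) h (- i%:R) = S.[0] - S.[- n%:R].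
Proof.
elim: n => [|n IH]; first by rewrite big_geq // oppr0 subrr.
by rewrite big_nat_recr //= IH -HS -natr1 opprD addrA subrK.
Qed.

Lemma ssumE k : ssum h k = S.[k%:~R] - S.[0].
Proof.
case: k => n.
  rewrite /ssum /= ssum_pos //.
by rewrite /ssum /= ssum_neg NegzE opprB mulrNz.
Qed.
End Ssum.
Lemma mu_monoE k a b : mu_mono k a b =
  - ((a`!)%:R * (b`!)%:R)^-1 * ssum (fun x => x ^+ a * (k%:~R - x) ^+ b) k.
Proof.
case: k => n.
  case: n => [|n].
    by rewrite /mu_mono /ssum /= big_geq // mulr0.
  rewrite /mu_mono /ssum /= mulNr big_distrr /=; congr (- _).
  apply: eq_bigr => i _; rewrite /expXY mulrzBr -!pmulrn.
  by rewrite invfM; ring.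
rewrite /mu_mono /ssum /= mulrN mulNr opprK big_distrr /=.
apply: eq_bigr => i _; rewrite /expXY mulrzDr mulrNz -!pmulrn NegzE mulrNz -pmulrn.
rewrite invfM. set u := (1 *- i). set v := 1 *- n.+1. 
have -> : (i%:R : rat) = - u by rewrite /u opprK.
ring.
Qed.

Definition SK (a b : nat) (K : rat) : {poly rat} :=
  \sum_(j < b.+1) ((K ^+ (b - j) * (-1) ^+ j) *+ 'C(b, j)) *: Sm (a + j).

Lemma SKP a b K x : (SK a b K).[x] - (SK a b K).[x - 1] = x ^+ a * (K - x) ^+ b.
Proof.
rewrite /SK !horner_sum -sumrB (exprDn K (- x) b) big_distrr /=.
apply: eq_bigr => j _; rewrite !hornerZ -mulrBr SmP (exprNn x) exprD.
ring.
Qed.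


Lemma mu_poly a b : exists P : {poly rat}, forall k, mu_mono k a b = P.[k%:~R].
Proof.
exists (- ((a`!)%:R * (b`!)%:R)^-1 *: \sum_(j < b.+1)
   ('X^(b - j) * (((-1) ^+ j) *+ 'C(b, j))%:P) * (Sm (a + j) - ((Sm (a + j)).[0])%:P)).
move=> k; rewrite mu_monoE (ssumE (SKP a b (k%:~R))) hornerZ; congr (_ * _).
rewrite /SK !horner_sum -sumrB; apply: eq_bigr => j _.
rewrite !hornerZ -mulrBr !hornerM hornerD hornerN !hornerC hornerXn.
ring.
Qed.
Lemma density (b : serZ) (p : nat) :
  exists s : laurent, forall n, (n < p)%N -> laurent_series s n = b n.
Proof.
pose a : 'rV[rat]_p := \row_j (j : nat)%:R.
pose V := Vandermonde p a.
have uV : V \in unitmx.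
  rewrite unitmxE det_Vandermonde unitfE.
  apply/prodf_neq0 => i _; apply/prodf_neq0 => j ij.
  by rewrite !mxE subr_eq0 eqr_nat gtn_eqF.
pose t : 'cV[rat]_p := \col_i (b i * (i`!)%:R).
pose c := invmx V *m t.
exists [seq ((val j)%:Z, c j 0) | j <- enum 'I_p].
move=> n ltnp; rewrite /laurent_series big_map big_enum /=.
have := congr1 (fun M : 'cV_p => M (Ordinal ltnp) 0) (mulKVmx uV t).
rewrite -/c /= !mxE /= => e.
have nf : (n`!)%:R != 0 :> rat by rewrite pnatr_eq0 -lt0n fact_gt0.
apply: (mulIf nf); rewrite -e mulr_suml; apply: eq_bigr => j _.
rewrite !mxE /expZ /= -mulrA mulfVK // mulrC.
by [].

Qed.

Definition Pab a b : {poly rat} :=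
  proj1_sig (constructive_indefinite_description _ (mu_poly a b)).
Lemma PabP a b k : mu_mono k a b = (Pab a b).[k%:~R].
Proof. by rewrite /Pab; case: constructive_indefinite_description. Qed.

Definition Fhat (f : serZ) : serXY :=
  fun a b => \sum_(n < size (Pab a b)) (Pab a b)`_n * (n`!)%:R * f n.

Lemma Fhat_laurent s : Fhat (laurent_series s) = mu_laurent s.
Proof.
apply: functional_extensionality => a; apply: functional_extensionality => b.
rewrite /Fhat /laurent_series /mu_laurent.
under eq_bigr do rewrite big_distrr.
rewrite exchange_big /=; apply: eq_bigr => x _.
rewrite PabP horner_coef big_distrr; apply: eq_bigr => n _.
rewrite /expZ.
have nf : (n`!)%:R != 0 :> rat by rewrite pnatr_eq0 -lt0n fact_gt0.
set c := nth _ (Pab a b) n; set y := x.1%:~R ^+ n.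
rewrite -[RHS]/(x.2 * (c * y)).
by field.
Qed.

Lemma Fhat_cont : filt_continuous Fhat.
Proof.
move=> f q.
pose p := (\max_(i < q) \max_(j < q) size (Pab i j))%N.
have hp : forall i j : 'I_q, (size (Pab i j) <= p)%N.
  move=> i j.
  have h1 := @bigop.leq_bigmax _ (fun j : 'I_q => size (Pab i j)) j.
  have h2 := @bigop.leq_bigmax _ (fun i : 'I_q => (\max_(j < q) size (Pab i j))%N) i.
  exact: leq_trans h1 h2.
exists p => g Hg a b Hab.
have ha : (a < q)%N by exact: leq_ltn_trans (leq_addr b a) Hab.
have hb : (b < q)%N by exact: leq_ltn_trans (leq_addl a b) Hab.
rewrite /subXY /Fhat -sumrB big1 // => n _.
rewrite -mulrBr.
have lt := leq_trans (ltn_ord n) (hp (Ordinal ha) (Ordinal hb)).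
by have := Hg n lt; rewrite /subZ => ->; rewrite mulr0.
Qed.

Theorem lemma2 :
  exists! F : serZ -> serXY,
    filt_continuous F /\
    (forall s : laurent, F (laurent_series s) = mu_laurent s).
Proof.
exists Fhat; split; first by split; [exact: Fhat_cont | exact: Fhat_laurent].
move=> G [HGc HGe].
apply: functional_extensionality => f; apply: functional_extensionality => a.
apply: functional_extensionality => b.
have [p1 H1] := HGc f (a + b).+1.
have [p2 H2] := Fhat_cont f (a + b).+1.
have [s Hs] := density f (maxn p1 p2).
have hin1 : inFZ p1 (subZ (laurent_series s) f).
  by move=> n lt; rewrite /subZ Hs ?subrr // (leq_trans lt (leq_maxl _ _)).
have hin2 : inFZ p2 (subZ (laurent_series s) f).
  by move=> n lt; rewrite /subZ Hs ?subrr // (leq_trans lt (leq_maxr _ _)).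
have e1 := H1 _ hin1 a b (ltnSn _).
have e2 := H2 _ hin2 a b (ltnSn _).
move: e1 e2; rewrite /subXY HGe Fhat_laurent => /subr0_eq e1 /subr0_eq e2.
by rewrite -e2 e1.
Qed.
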